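(* For every modal formula $A$ and label $x$: if ${\sf GL}\vdash A$ then the sequent $\emptyset\Rightarrow x:A$ has an $\infty$-proof in $\mathsf{labK4}$.
   Context: Modal formulas: $A ::= p \mid \bot \mid A\wedge A \mid A \vee A \mid A \to A \mid \Box A \mid \Diamond A$. ${\sf GL}$ is the Hilbert system containing all classical propositional tautologies, the axioms $\Box(A\to B)\to(\Box A\to\Box B)$, $\Box A\to\Box\Box A$ and $\Box(\Box A\to A)\to\Box A$, closed under modus ponens and necessitation (from $A$ infer $\Box A$). ($\Diamond$ is interpreted classically as dual to $\Box$ in ${\sf GL}$.) Labelled sequents $\mathcal R,\Gamma\Rightarrow\Delta$ with $\mathcal R$ a set of relational atoms $xRy$ and $\Gamma,\Delta$ multisets of labelled formulas $x:A$. $\mathsf{labK4}$ rules (premisses / conclusion): id $\mathcal R,x:p\Rightarrow x:p$; $\bot$L $\mathcal R,x:\bot,\Gamma\Rightarrow\Delta$; cut: $\mathcal R,\Gamma\Rightarrow\Delta,x:A$ and $\mathcal R,\Gamma',x:A\Rightarrow\Delta'$ / $\mathcal R,\Gamma,\Gamma'\Rightarrow\Delta,\Delta'$; left/right weakening and contraction; thinning $\mathcal R,\Gamma\Rightarrow\Delta$ / $\mathcal R,\mathcal R',\Gamma\Rightarrow\Delta$; $\to$L: $\mathcal R,\Gamma\Rightarrow\Delta,x:A$ and $\mathcal R,\Gamma',x:B\Rightarrow\Delta'$ / $\mathcal R,\Gamma,\Gamma',x:A\to B\Rightarrow\Delta,\Delta'$; $\to$R: $\mathcal R,\Gamma,x:A\Rightarrow\Delta,x:B$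 / $\mathcal R,\Gamma\Rightarrow\Delta,x:A\to B$; $\wedge$L, $\wedge$R, $\vee$L, $\vee$R as in Gentzen's LK on labelled formulas with the same label; $\Diamond$L ($y$ fresh): $\mathcal R,xRy,\Gamma,y:A\Rightarrow\Delta$ / $\mathcal R,\Gamma,x:\Diamond A\Rightarrow\Delta$; $\Diamond$R: $\mathcal R,xRy,\Gamma\Rightarrow\Delta,y:A$ / $\mathcal R,xRy,\Gamma\Rightarrow\Delta,x:\Diamond A$; $\Box$R ($y$ fresh): $\mathcal R,xRy,\Gamma\Rightarrow\Delta,y:A$ / $\mathcal R,\Gamma\Rightarrow\Delta,x:\Box A$; $\Box$L: $\mathcal R,xRy,\Gamma,y:A\Rightarrow\Delta$ / $\mathcal R,xRy,\Gamma,x:\Box A\Rightarrow\Delta$; tr: $\mathcal R,xRy,yRz,xRz,\Gamma\Rightarrow\Delta$ / $\mathcal R,xRy,yRz,\Gamma\Rightarrow\Delta$. A preproof is a possibly infinite tree of rule instances whose leaves are zero-premiss rules; a trace along an infinite branch $(S_i)$ is a sequence of labels $(x_i)_{i\ge k}$ with, for each $i$, $x_i=x_{i+1}$ or $x_iRx_{i+1}$ in the relational context of $S_i$ (progress point); progressing = infinitely many progress points; an $\infty$-proof is a preproof all of whose infinite branches have a progressing trace. *)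

(* Defs.v *)
From Stdlib Require Import List Permutation Arith.
Import ListNotations.

Inductive form : Type :=
| Var : nat -> form
| Bot : form
| And : form -> form -> form
| Or  : form -> form -> form
| Imp : form -> form -> form
| Box : form -> form
| Dia : form -> form.

Definition Neg (A : form) : form := Imp A Bot.

(** Classical propositional evaluation: variables, boxed and diamond
    formulas are propositional atoms, valued by an arbitrary v. *)
Fixpoint peval (v : form -> bool) (A : form) : bool :=
  match A with
  | Var _ => v A
  | Bot => false
  | And B C => peval v B && peval v C
  | Or B C => peval v B || peval v C
  | Imp B C => implb (peval v B) (peval v C)
  | Box _ => v A
  | Dia _ => v A
  end.

Definition tautology (A : form) : Prop := forall v, peval v A = true.

Inductive GL : form -> Prop :=
| GL_taut : forall A, tautology A -> GL A
| GL_K : forall A B, GL (Imp (Box (Imp A B)) (Imp (Box A) (Box B)))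
| GL_4 : forall A, GL (Imp (Box A) (Box (Box A)))
| GL_Lob : forall A, GL (Imp (Box (Imp (Box A) A)) (Box A))
| GL_dual1 : forall A, GL (Imp (Dia A) (Neg (Box (Neg A))))
| GL_dual2 : forall A, GL (Imp (Neg (Box (Neg A))) (Dia A))
| GL_MP : forall A B, GL (Imp A B) -> GL A -> GL B
| GL_Nec : forall A, GL A -> GL (Box A).

Definition label := nat.
Definition lform : Type := (label * form)%type.

Record sequent : Type := Seq {
  rel : list (label * label);
  ant : list lform;
  suc : list lform
}.

(** R is a set (equality by membership), Gamma and Delta multisets
    (equality up to permutation). *)
Definition seq_equiv (s t : sequent) : Prop :=
  (forall a, In a (rel s) <-> In a (rel t)) /\
  Permutation (ant s) (ant t) /\ Permutation (suc s) (suc t).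

Definition labels_of (s : sequent) : list label :=
  flat_map (fun p => [fst p; snd p]) (rel s) ++ map fst (ant s) ++ map fst (suc s).

Definition fresh (y : label) (s : sequent) : Prop := ~ In y (labels_of s).

Inductive lk_rule : list sequent -> sequent -> Prop :=
| r_id : forall R x p,
    lk_rule [] (Seq R [(x, Var p)] [(x, Var p)])
| r_botL : forall R x G D,
    lk_rule [] (Seq R ((x, Bot) :: G) D)
| r_cut : forall R G G' D D' x A,
    lk_rule [Seq R G ((x, A) :: D); Seq R ((x, A) :: G') D']
            (Seq R (G ++ G') (D ++ D'))
| r_WL : forall R G D a, lk_rule [Seq R G D] (Seq R (a :: G) D)
| r_WR : forall R G D a, lk_rule [Seq R G D] (Seq R G (a :: D))
| r_CL : forall R G D a, lk_rule [Seq R (a :: a :: G) D] (Seq R (a :: G) D)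
| r_CR : forall R G D a, lk_rule [Seq R G (a :: a :: D)] (Seq R G (a :: D))
| r_thin : forall R R' G D, lk_rule [Seq R G D] (Seq (R ++ R') G D)
| r_impL : forall R G G' D D' x A B,
    lk_rule [Seq R G ((x, A) :: D); Seq R ((x, B) :: G') D']
            (Seq R ((x, Imp A B) :: G ++ G') (D ++ D'))
| r_impR : forall R G D x A B,
    lk_rule [Seq R ((x, A) :: G) ((x, B) :: D)] (Seq R G ((x, Imp A B) :: D))
| r_andL1 : forall R G D x A B,
    lk_rule [Seq R ((x, A) :: G) D] (Seq R ((x, And A B) :: G) D)
| r_andL2 : forall R G D x A B,
    lk_rule [Seq R ((x, B) :: G) D] (Seq R ((x, And A B) :: G) D)
| r_andR : forall R G D x A B,
    lk_rule [Seq R G ((x, A) :: D); Seq R G ((x, B) :: D)]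
            (Seq R G ((x, And A B) :: D))
| r_orL : forall R G D x A B,
    lk_rule [Seq R ((x, A) :: G) D; Seq R ((x, B) :: G) D]
            (Seq R ((x, Or A B) :: G) D)
| r_orR1 : forall R G D x A B,
    lk_rule [Seq R G ((x, A) :: D)] (Seq R G ((x, Or A B) :: D))
| r_orR2 : forall R G D x A B,
    lk_rule [Seq R G ((x, B) :: D)] (Seq R G ((x, Or A B) :: D))
| r_diaL : forall R G D x y A,
    fresh y (Seq R ((x, Dia A) :: G) D) ->
    lk_rule [Seq ((x, y) :: R) ((y, A) :: G) D] (Seq R ((x, Dia A) :: G) D)
| r_diaR : forall R G D x y A,
    In (x, y) R ->
    lk_rule [Seq R G ((y, A) :: D)] (Seq R G ((x, Dia A) :: D))
| r_boxR : forall R G D x y A,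
    fresh y (Seq R G ((x, Box A) :: D)) ->
    lk_rule [Seq ((x, y) :: R) G ((y, A) :: D)] (Seq R G ((x, Box A) :: D))
| r_boxL : forall R G D x y A,
    In (x, y) R ->
    lk_rule [Seq R ((y, A) :: G) D] (Seq R ((x, Box A) :: G) D)
| r_tr : forall R G D x y z,
    In (x, y) R -> In (y, z) R ->
    lk_rule [Seq ((x, z) :: R) G D] (Seq R G D).

Definition rule_inst (ps : list sequent) (c : sequent) : Prop :=
  exists ps0 c0, lk_rule ps0 c0 /\ seq_equiv c c0 /\ Forall2 seq_equiv ps ps0.

CoInductive ptree : Type :=
| Node : sequent -> list ptree -> ptree.

Definition root (t : ptree) : sequent := match t with Node s _ => s end.
Definition children (t : ptree) : list ptree := match t with Node _ ts => ts end.

CoInductive preproof : ptree -> Prop :=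
| pp_node : forall s ts,
    rule_inst (map root ts) s ->
    (forall t, In t ts -> preproof t) ->
    preproof (Node s ts).

Definition inf_branch (t : ptree) (b : nat -> ptree) : Prop :=
  b 0 = t /\ forall n, In (b (S n)) (children (b n)).

Definition progressing_trace (b : nat -> ptree) : Prop :=
  exists (k : nat) (xs : nat -> label),
    (forall i, k <= i ->
       xs i = xs (S i) \/ In (xs i, xs (S i)) (rel (root (b i)))) /\
    (forall n, exists i, n <= i /\ k <= i /\
       In (xs i, xs (S i)) (rel (root (b i)))).

Definition inf_proof (t : ptree) : Prop :=
  preproof t /\ forall b, inf_branch t b -> progressing_trace b.

(* Main.v *)
Require Import Defs.
From Stdlib Require Import List.
Import ListNotations.
From Stdlib Require Import Permutation Arith Lia Classical ClassicalEpsilon Bool.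


Definition der (s : sequent) : Prop := exists t, root t = s /\ inf_proof t.

Lemma equiv_refl s : seq_equiv s s.
Proof. split; [tauto|split; apply Permutation_refl]. Qed.
Lemma equiv_sym s t : seq_equiv s t -> seq_equiv t s.
Proof. intros [H1 [H2 H3]]. split; [intro a; specialize (H1 a); tauto|split; apply Permutation_sym; auto]. Qed.
Lemma equiv_trans s t u : seq_equiv s t -> seq_equiv t u -> seq_equiv s u.
Proof. intros [H1 [H2 H3]] [K1 [K2 K3]]. split; [intro a; specialize (H1 a); specialize (K1 a); tauto|split; eapply Permutation_trans; eauto]. Qed.

Lemma trace_shift b m : progressing_trace (fun n => b (n + m)) -> progressing_trace b.
Proof.
  intros [k [xs [H1 H2]]]. exists (k + m), (fun i => xs (i - m)). split.
  - intros i Hi. specialize (H1 (i - m) ltac:(lia)).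
    replace (S i - m) with (S (i - m)) by lia. replace (i - m + m) with i in H1 by lia. exact H1.
  - intros n. destruct (H2 n) as [i [Hi1 [Hi2 Hi3]]]. exists (i + m). split; [lia|split; [lia|]].
    replace (i + m - m) with i by lia. replace (S (i + m) - m) with (S i) by lia. exact Hi3.
Qed.

Lemma branch_shift t b m : inf_branch t b -> inf_branch (b m) (fun n => b (n + m)).
Proof. intros [H0 H1]. split; [reflexivity|]. intro n. simpl. apply H1. Qed.

Lemma inf_proof_node s ts : rule_inst (map root ts) s -> Forall inf_proof ts -> inf_proof (Node s ts).
Proof.
  intros HR HF. rewrite Forall_forall in HF. split.
  - constructor; auto. intros t Ht. apply HF; auto.
  - intros b [H0 H1]. apply (trace_shift b 1).
    assert (Hin : In (b 1) ts). { specialize (H1 0). rewrite H0 in H1. exact H1. }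
    apply (proj2 (HF _ Hin)). split; [reflexivity|]. intro n. apply H1.
Qed.

Lemma inf_proof_child s ts t : inf_proof (Node s ts) -> In t ts -> inf_proof t.
Proof.
  intros [Hp Hb] Hin. split.
  - inversion Hp; subst. auto.
  - intros b [H0 H1].
    set (b' := fun n => match n with 0 => Node s ts | S n => b n end).
    assert (Hb' : inf_branch (Node s ts) b').
    { split; [reflexivity|]. intros [|n]; simpl; [rewrite H0; exact Hin|apply H1]. }
    destruct (Hb _ Hb') as [k [xs [K1 K2]]].
    exists k, (fun i => xs (S i)). split.
    + intros i Hi. apply (K1 (S i)). lia.
    + intros n. destruct (K2 (S (n + k))) as [i [Hi1 [Hi2 Hi3]]]. destruct i as [|i]; [lia|].
      exists i. split; [lia|split;[lia|exact Hi3]].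
Qed.

Lemma der_equiv s s' : der s -> seq_equiv s s' -> der s'.
Proof.
  intros [[s0 ts] [Hr Hi]] He. simpl in Hr. subst s0.
  exists (Node s' ts). split; [reflexivity|]. apply inf_proof_node.
  - destruct Hi as [Hp _]. inversion Hp; subst.
    destruct H1 as [ps0 [c0 [H1 [H3 H4]]]]. exists ps0, c0. split; auto. split; auto.
    eapply equiv_trans; [apply equiv_sym; exact He|exact H3].
  - apply Forall_forall. intros t Ht. eapply inf_proof_child; eauto.
Qed.

Lemma der_list ss : Forall der ss -> exists ts, map root ts = ss /\ Forall inf_proof ts.
Proof.
  induction 1 as [|s ss [t [H1 H2]] _ [ts [IH1 IH2]]].
  - exists []. split; auto.
  - exists (t :: ts). simpl. split; [congruence|constructor; auto].
Qed.

Lemma der_rule ps c : rule_inst ps c -> Forall der ps -> der c.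
Proof.
  intros HR HF. destruct (der_list _ HF) as [ts [H1 H2]].
  exists (Node c ts). split; [reflexivity|]. apply inf_proof_node; auto. congruence.
Qed.

Lemma Forall2_equiv_refl ps : Forall2 seq_equiv ps ps.
Proof. induction ps; constructor; auto using equiv_refl. Qed.

Lemma der_lk ps c : lk_rule ps c -> Forall der ps -> der c.
Proof. intros H HF. apply (der_rule ps); auto. exists ps, c. split; auto. split. apply equiv_refl. apply Forall2_equiv_refl. Qed.

Lemma der_lk0 c : lk_rule [] c -> der c.
Proof. intros H. apply (der_lk [] c H). constructor. Qed.
Lemma der_lk1 p c : lk_rule [p] c -> der p -> der c.
Proof. intros H Hp. apply (der_lk [p] c H). constructor; auto. Qed.
Lemma der_lk2 p q c : lk_rule [p;q] c -> der p -> der q -> der c.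
Proof. intros H Hp Hq. apply (der_lk [p;q] c H). constructor; auto. Qed.

Lemma equiv_perm R G G' D D' : Permutation G G' -> Permutation D D' -> seq_equiv (Seq R G D) (Seq R G' D').
Proof. intros. split; [tauto|split; auto]. Qed.

Lemma der_perm R G G' D D' : der (Seq R G D) -> Permutation G G' -> Permutation D D' -> der (Seq R G' D').
Proof. intros H H1 H2. eapply der_equiv; eauto. apply equiv_perm; auto. Qed.

Definition freshl (s : sequent) : label := S (list_max (labels_of s)).
Lemma freshl_fresh s : fresh (freshl s) s.
Proof.
  unfold fresh, freshl. intro H. pose proof (list_max_le (labels_of s) (list_max (labels_of s))) as [H1 _].
  specialize (H1 (le_n _)). rewrite Forall_forall in H1. specialize (H1 _ H). lia.
Qed.

Lemma weakL R G D L : der (Seq R G D) -> der (Seq R (L ++ G) D).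
Proof. intros H. induction L; simpl; auto. eapply der_lk1; [apply r_WL|auto]. Qed.
Lemma weakR R G D L : der (Seq R G D) -> der (Seq R G (L ++ D)).
Proof. intros H. induction L; simpl; auto. eapply der_lk1; [apply r_WR|auto]. Qed.

Lemma contrL1 R a G D : der (Seq R (a :: G) D) -> In a G -> der (Seq R G D).
Proof.
  intros H Hin. destruct (in_split _ _ Hin) as [l1 [l2 ->]].
  assert (Hp : Permutation (l1 ++ a :: l2) (a :: l1 ++ l2)) by (apply Permutation_sym, Permutation_middle).
  eapply der_perm; [|apply Permutation_sym, Hp|apply Permutation_refl].
  eapply der_lk1; [apply r_CL|]. eapply der_perm; [exact H| |apply Permutation_refl]. constructor. exact Hp.
Qed.
Lemma contrR1 R a G D : der (Seq R G (a :: D)) -> In a D -> der (Seq R G D).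
Proof.
  intros H Hin. destruct (in_split _ _ Hin) as [l1 [l2 ->]].
  assert (Hp : Permutation (l1 ++ a :: l2) (a :: l1 ++ l2)) by (apply Permutation_sym, Permutation_middle).
  eapply der_perm; [|apply Permutation_refl|apply Permutation_sym, Hp].
  eapply der_lk1; [apply r_CR|]. eapply der_perm; [exact H|apply Permutation_refl|]. constructor. exact Hp.
Qed.
Lemma contrL R L G D : der (Seq R (L ++ G) D) -> incl L G -> der (Seq R G D).
Proof.
  induction L as [|a L IH]; simpl; auto. intros H Hi. apply IH; [|intros y Hy; apply Hi; right; auto].
  eapply contrL1; eauto. apply in_or_app. right. apply Hi. left. auto.
Qed.
Lemma contrR R L G D : der (Seq R G (L ++ D)) -> incl L D -> der (Seq R G D).
Proof.
  induction L as [|a L IH]; simpl; auto. intros H Hi. apply IH; [|intros y Hy; apply Hi; right; auto].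
  eapply contrR1; eauto. apply in_or_app. right. apply Hi. left. auto.
Qed.

Lemma identity A : forall R x, der (Seq R [(x, A)] [(x, A)]).
Proof.
  induction A; intros R x.
  - apply der_lk0. apply r_id.
  - apply der_lk0. apply r_botL.
  - eapply der_lk2; [apply r_andR| |].
    + eapply der_lk1; [apply r_andL1|]. apply IHA1.
    + eapply der_lk1; [apply r_andL2|]. apply IHA2.
  - eapply der_lk2; [apply r_orL| |].
    + eapply der_lk1; [apply r_orR1|]. apply IHA1.
    + eapply der_lk1; [apply r_orR2|]. apply IHA2.
  - eapply der_lk1; [apply r_impR|].
    eapply der_perm; [| apply perm_swap | apply Permutation_refl].
    eapply der_lk2; [apply (r_impL R [(x,A1)] [] [] [(x,A2)])| |]; simpl.
    + apply IHA1.
    + apply IHA2.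
  - set (y := freshl (Seq R [(x, Box A)] [(x, Box A)])).
    eapply der_lk1; [apply (r_boxR R [(x, Box A)] [] x y A); apply freshl_fresh|].
    eapply der_lk1; [apply r_boxL; left; reflexivity|]. apply IHA.
  - set (y := freshl (Seq R [(x, Dia A)] [(x, Dia A)])).
    eapply der_lk1; [apply (r_diaL R [] [(x, Dia A)] x y A); apply freshl_fresh|].
    eapply der_lk1; [apply r_diaR; left; reflexivity|]. apply IHA.
Qed.


Fixpoint fsize (A : form) : nat :=
  match A with
  | Var _ | Box _ | Dia _ => 0
  | Bot => 1
  | And B C | Or B C | Imp B C => 1 + fsize B + fsize C
  end.
Fixpoint lsum (l : list form) : nat := match l with [] => 0 | A :: l => fsize A + lsum l end.
Lemma lsum_app l1 l2 : lsum (l1 ++ l2) = lsum l1 + lsum l2.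
Proof. induction l1; simpl; lia. Qed.

Definition lab (x : label) (l : list form) : list lform := map (fun A => (x, A)) l.

Definition valid (G D : list form) : Prop :=
  forall v, (forall A, In A G -> peval v A = true) -> exists B, In B D /\ peval v B = true.

Lemma form_eq_dec (A B : form) : {A = B} + {A <> B}.
Proof. decide equality; apply Nat.eq_dec. Qed.

Lemma valid_permL G G' D : valid G D -> Permutation G G' -> valid G' D.
Proof. intros H P v Hv. apply H. intros A HA. apply Hv. eapply Permutation_in; eauto. Qed.
Lemma valid_permR G D D' : valid G D -> Permutation D D' -> valid G D'.
Proof. intros H P v Hv. destruct (H v Hv) as [B [HB1 HB2]]. exists B. split; auto. eapply Permutation_in; eauto. Qed.

Lemma lab_perm x l l' : Permutation l l' -> Permutation (lab x l) (lab x l').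
Proof. apply Permutation_map. Qed.

Lemma prop_complete_n : forall n R x G D, lsum G + lsum D < n -> valid G D -> der (Seq R (lab x G) (lab x D)).
Proof.
  induction n as [|n IH]; intros R x G D Hn Hv; [lia|].
  destruct (classic (exists C, In C G /\ 0 < fsize C)) as [[C [HC HsC]]|HG].
  { destruct (in_split _ _ HC) as [g1 [g2 ->]].
    set (Gr := g1 ++ g2).
    assert (HP : Permutation (g1 ++ C :: g2) (C :: Gr)) by (apply Permutation_sym, Permutation_middle).
    rewrite lsum_app in Hn. simpl in Hn.
    assert (Hs : lsum Gr + fsize C + lsum D < S n) by (unfold Gr; rewrite lsum_app; lia).
    apply (valid_permL _ _ _ Hv) in HP as Hv'.
    eapply der_perm; [|apply lab_perm, Permutation_sym, HP|apply Permutation_refl].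
    clearbody Gr. clear Hv HC. simpl.
    destruct C as [p| |C1 C2|C1 C2|C1 C2|C1|C1]; simpl in HsC, Hs; try lia.
    - apply der_lk0. apply r_botL.
    - eapply der_lk1; [apply r_CL|].
      eapply der_lk1; [apply r_andL1|].
      eapply der_perm; [|apply perm_swap|apply Permutation_refl].
      eapply der_lk1; [apply r_andL2|].
      change (der (Seq R (lab x (C2 :: C1 :: Gr)) (lab x D))).
      apply IH; [simpl; lia|].
      intros v Hw. apply Hv'. intros A [<-|HA]; [|apply Hw; simpl; auto].
      simpl. rewrite (Hw C1), (Hw C2); simpl; auto.
    - eapply der_lk2; [apply r_orL| |].
      + change (der (Seq R (lab x (C1 :: Gr)) (lab x D))). apply IH; [simpl; lia|].
        intros v Hw. apply Hv'. intros A [<-|HA]; [|apply Hw; simpl; auto].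
        simpl. rewrite (Hw C1); simpl; auto.
      + change (der (Seq R (lab x (C2 :: Gr)) (lab x D))). apply IH; [simpl; lia|].
        intros v Hw. apply Hv'. intros A [<-|HA]; [|apply Hw; simpl; auto].
        simpl. rewrite (Hw C2); simpl; auto. apply orb_true_r.
    - assert (H1 : der (Seq R ((x, Imp C1 C2) :: lab x Gr ++ lab x Gr) (lab x D ++ lab x D))).
      { eapply der_lk2; [apply r_impL| |].
        + change (der (Seq R (lab x Gr) (lab x (C1 :: D)))). apply IH; [simpl; lia|].
          intros v Hw. destruct (peval v C1) eqn:E1.
          * exists C1. simpl; auto.
          * destruct (Hv' v) as [B [HB1 HB2]]; [|exists B; simpl; auto].
            intros A [<-|HA]; [simpl; rewrite E1; auto|auto].
        + change (der (Seq R (lab x (C2 :: Gr)) (lab x D))). apply IH; [simpl; lia|].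
          intros v Hw. apply Hv'. intros A [<-|HA]; [|apply Hw; simpl; auto].
          simpl. rewrite (Hw C2); simpl; auto. apply implb_true_r. }
      eapply contrL with (L := lab x Gr).
      * eapply der_perm; [apply (contrR _ _ _ _ H1); apply incl_refl| |apply Permutation_refl].
        simpl. apply Permutation_middle.
      * intros a Ha. right. auto. }
  destruct (classic (exists C, In C D /\ 0 < fsize C)) as [[C [HC HsC]]|HD].
  { destruct (in_split _ _ HC) as [g1 [g2 ->]].
    set (Dr := g1 ++ g2).
    assert (HP : Permutation (g1 ++ C :: g2) (C :: Dr)) by (apply Permutation_sym, Permutation_middle).
    rewrite lsum_app in Hn. simpl in Hn.
    assert (Hs : lsum G + fsize C + lsum Dr < S n) by (unfold Dr; rewrite lsum_app; lia).
    apply (valid_permR _ _ _ Hv) in HP as Hv'.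
    eapply der_perm; [|apply Permutation_refl|apply lab_perm, Permutation_sym, HP].
    clearbody Dr. clear Hv HC HG. simpl.
    destruct C as [p| |C1 C2|C1 C2|C1 C2|C1|C1]; simpl in HsC, Hs; try lia.
    - eapply der_lk1; [apply r_WR|]. apply IH; [lia|].
      intros v Hw. destruct (Hv' v Hw) as [B [[<-|HB1] HB2]]; [discriminate|eauto].
    - eapply der_lk2; [apply r_andR| |].
      + change (der (Seq R (lab x G) (lab x (C1 :: Dr)))). apply IH; [simpl; lia|].
        intros v Hw. destruct (Hv' v Hw) as [B [[<-|HB1] HB2]]; [|exists B; simpl; auto].
        exists C1. simpl in HB2. apply andb_true_iff in HB2. simpl; intuition.
      + change (der (Seq R (lab x G) (lab x (C2 :: Dr)))). apply IH; [simpl; lia|].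
        intros v Hw. destruct (Hv' v Hw) as [B [[<-|HB1] HB2]]; [|exists B; simpl; auto].
        exists C2. simpl in HB2. apply andb_true_iff in HB2. simpl; intuition.
    - eapply der_lk1; [apply r_CR|].
      eapply der_lk1; [apply r_orR1|].
      eapply der_perm; [|apply Permutation_refl|apply perm_swap].
      eapply der_lk1; [apply r_orR2|].
      change (der (Seq R (lab x G) (lab x (C2 :: C1 :: Dr)))). apply IH; [simpl; lia|].
      intros v Hw. destruct (Hv' v Hw) as [B [[<-|HB1] HB2]]; [|exists B; simpl; auto].
      simpl in HB2. apply orb_true_iff in HB2. destruct HB2; [exists C1|exists C2]; simpl; auto.
    - eapply der_lk1; [apply r_impR|].
      change (der (Seq R (lab x (C1 :: G)) (lab x (C2 :: Dr)))). apply IH; [simpl; lia|].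
      intros v Hw. destruct (Hv' v) as [B [[<-|HB1] HB2]].
      + intros A HA. apply Hw. simpl; auto.
      + exists C2. simpl in HB2. rewrite (Hw C1) in HB2; simpl; auto.
      + exists B. simpl; auto. }
  assert (HatG : forall C, In C G -> fsize C = 0) by (intros C HC; destruct (Nat.eq_dec (fsize C) 0); auto; exfalso; apply HG; exists C; split; auto; lia).
  assert (HatD : forall C, In C D -> fsize C = 0) by (intros C HC; destruct (Nat.eq_dec (fsize C) 0); auto; exfalso; apply HD; exists C; split; auto; lia).
  set (v0 := fun A => if in_dec form_eq_dec A G then true else false).
  assert (Hat : forall C, fsize C = 0 -> peval v0 C = v0 C) by (intros [] H; simpl in H; try lia; reflexivity).
  destruct (Hv v0) as [B [HB1 HB2]].
  { intros A HA. rewrite Hat by auto. unfold v0. destruct (in_dec form_eq_dec A G); tauto. }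
  rewrite Hat in HB2 by auto. unfold v0 in HB2. destruct (in_dec form_eq_dec B G) as [HB3|]; [|discriminate].
  destruct (in_split _ _ HB1) as [d1 [d2 ->]]. destruct (in_split _ _ HB3) as [g1 [g2 ->]].
  pose proof (weakR _ _ _ (lab x (d1 ++ d2)) (weakL _ _ _ (lab x (g1 ++ g2)) (identity B R x))) as H.
  eapply der_perm; [exact H| |].
  - unfold lab. rewrite !map_app. simpl. rewrite <- app_assoc. apply Permutation_app_head. apply Permutation_sym, Permutation_cons_append.
  - unfold lab. rewrite !map_app. simpl. rewrite <- app_assoc. apply Permutation_app_head. apply Permutation_sym, Permutation_cons_append.
Qed.

Lemma prop_complete R x G D : valid G D -> der (Seq R (lab x G) (lab x D)).
Proof. intros. apply (prop_complete_n (S (lsum G + lsum D))); auto. Qed.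

Lemma taut_der R x A : tautology A -> der (Seq R [] [(x, A)]).
Proof. intros H. apply (prop_complete R x [] [A]). intros v _. exists A. split; simpl; auto. Qed.

Definition idt (R : list (label * label)) (y : label) (A : form) : ptree :=
  proj1_sig (constructive_indefinite_description _ (identity A R y)).
Lemma idt_spec R y A : root (idt R y A) = Seq R [(y, A)] [(y, A)] /\ inf_proof (idt R y A).
Proof. unfold idt. destruct (constructive_indefinite_description _ _). exact a. Qed.

Definition zof x A R y := freshl (Seq R [(x, Box (Imp (Box A) A))] [(y, Box A)]).

CoFixpoint L (x : label) (A : form) (R : list (label * label)) (y : label) : ptree :=
  Node (Seq R [(x, Box (Imp (Box A) A))] [(y, A)])
   [Node (Seq R [(x, Box (Imp (Box A) A)); (x, Box (Imp (Box A) A))] [(y, A)])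
     [Node (Seq R [(y, Imp (Box A) A); (x, Box (Imp (Box A) A))] [(y, A)])
       [Node (Seq R [(x, Box (Imp (Box A) A))] [(y, Box A)])
         [Node (Seq ((y, zof x A R y) :: R) [(x, Box (Imp (Box A) A))] [(zof x A R y, A)])
           [L x A ((x, zof x A R y) :: (y, zof x A R y) :: R) (zof x A R y)]];
        idt R y A]]].

Definition n4 x A R y := Node (Seq ((y, zof x A R y) :: R) [(x, Box (Imp (Box A) A))] [(zof x A R y, A)])
           [L x A ((x, zof x A R y) :: (y, zof x A R y) :: R) (zof x A R y)].
Definition n3 x A R y := Node (Seq R [(x, Box (Imp (Box A) A))] [(y, Box A)]) [n4 x A R y].
Definition n2 x A R y := Node (Seq R [(y, Imp (Box A) A); (x, Box (Imp (Box A) A))] [(y, A)]) [n3 x A R y; idt R y A].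
Definition n1 x A R y := Node (Seq R [(x, Box (Imp (Box A) A)); (x, Box (Imp (Box A) A))] [(y, A)]) [n2 x A R y].

Definition frob (t : ptree) : ptree := match t with Node s ts => Node s ts end.
Lemma frob_eq t : t = frob t. Proof. destruct t; reflexivity. Qed.

Lemma L_unfold x A R y : L x A R y = Node (Seq R [(x, Box (Imp (Box A) A))] [(y, A)]) [n1 x A R y].
Proof. rewrite (frob_eq (L x A R y)) at 1. reflexivity. Qed.

Lemma preproof_coind (P : ptree -> Prop) :
  (forall t, P t -> exists s ts, t = Node s ts /\ rule_inst (map root ts) s /\
       forall t', In t' ts -> P t' \/ preproof t') ->
  forall t, P t -> preproof t.
Proof.
  intros H. cofix CH. intros t Ht. destruct (H t Ht) as [s [ts [-> [H1 H2]]]].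
  constructor; auto. intros t' Ht'. destruct (H2 t' Ht') as [HP|HP]; [apply CH; auto|exact HP].
Qed.

Definition Inv (x : label) (R : list (label * label)) (y : label) := exists R0, R = (x, y) :: R0 /\ y <> x.

Definition spine x A t := exists R y, Inv x R y /\
  (t = L x A R y \/ t = n1 x A R y \/ t = n2 x A R y \/ t = n3 x A R y \/ t = n4 x A R y).

Lemma lk_inst ps c : lk_rule ps c -> rule_inst ps c.
Proof. intros H. exists ps, c. split; auto. split. apply equiv_refl. apply Forall2_equiv_refl. Qed.

Lemma zof_ne x A R y : zof x A R y <> x /\ zof x A R y <> y.
Proof.
  pose proof (freshl_fresh (Seq R [(x, Box (Imp (Box A) A))] [(y, Box A)])) as H. unfold fresh, labels_of in H.
  unfold zof. split; intro E; apply H; rewrite E; apply in_or_app; right; simpl; auto.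
Qed.

Lemma Inv_next x A R y : Inv x R y -> Inv x ((x, zof x A R y) :: (y, zof x A R y) :: R) (zof x A R y).
Proof. intros _. eexists. split; [reflexivity|]. apply zof_ne. Qed.

Lemma spine_preproof x A t : spine x A t -> preproof t.
Proof.
  apply preproof_coind. clear t. intros t [R [y [HI Ht]]].
  assert (Hxy : In (x, y) R) by (destruct HI as [R0 [-> _]]; left; reflexivity).
  destruct Ht as [->|[->|[->|[->| ->]]]].
  - rewrite L_unfold. do 2 eexists. split; [reflexivity|]. split.
    + apply lk_inst. apply (r_CL R [] [(y, A)] (x, Box (Imp (Box A) A))).
    + intros t' [<-|[]]. left. exists R, y. split; auto.
  - do 2 eexists. split; [reflexivity|]. split.
    + apply lk_inst. apply (r_boxL R [(x, Box (Imp (Box A) A))] [(y, A)] x y (Imp (Box A) A) Hxy).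
    + intros t' [<-|[]]. left. exists R, y. split; auto.
  - do 2 eexists. split; [reflexivity|]. split.
    + simpl. rewrite (proj1 (idt_spec R y A)).
      apply lk_inst. apply (r_impL R [(x, Box (Imp (Box A) A))] [] [] [(y, A)] y (Box A) A).
    + intros t' [<-|[<-|[]]].
      * left. exists R, y. split; auto.
      * right. apply (proj2 (idt_spec R y A)).
  - do 2 eexists. split; [reflexivity|]. split.
    + apply lk_inst. apply (r_boxR R [(x, Box (Imp (Box A) A))] [] y (zof x A R y) A). apply freshl_fresh.
    + intros t' [<-|[]]. left. exists R, y. split; auto.
  - do 2 eexists. split; [reflexivity|]. split.
    + simpl.
      apply lk_inst. apply r_tr with (y := y); [right; exact Hxy|left; reflexivity].
    + intros t' [<-|[]]. left. do 2 eexists. split; [apply Inv_next; exact HI|left; reflexivity].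
Qed.

Definition tl (x : label) (s : sequent) : label :=
  match rel s, suc s with
  | (w, v) :: _, (u, _) :: _ => if Nat.eqb v u && negb (Nat.eqb w x) then w else u
  | [], (u, _) :: _ => u
  | _, [] => 0
  end.

Lemma tl_std x R0 y G F D : y <> x -> tl x (Seq ((x, y) :: R0) G ((y, F) :: D)) = y.
Proof. intros H. unfold tl. simpl. rewrite Nat.eqb_refl. simpl. rewrite Nat.eqb_refl. reflexivity. Qed.

Lemma Lchild x A R y t : In t (children (L x A R y)) -> t = n1 x A R y.
Proof. rewrite L_unfold. simpl. intros [<-|[]]; auto. Qed.

Lemma loeb_branch x A R y b : Inv x R y -> inf_branch (L x A R y) b -> progressing_trace b.
Proof.
  intros HI Hb. destruct Hb as [Hb0 Hb1].
  assert (Hall : forall i, spine x A (b i) \/ exists j R y, b j = idt R y A).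
  { induction i as [|i IH].
    - left. exists R, y. rewrite Hb0. auto.
    - destruct IH as [[R1 [y1 [HI1 Ht]]]|H]; [|right; auto].
      specialize (Hb1 i).
      destruct Ht as [E|[E|[E|[E|E]]]]; rewrite E in Hb1.
      + apply Lchild in Hb1. left. exists R1, y1. split; [auto|tauto].
      + destruct Hb1 as [<-|[]]. left. exists R1, y1. split; [auto|tauto].
      + destruct Hb1 as [<-|[E2|[]]]; [left; exists R1, y1; (split; [auto|tauto])|right; exists (S i), R1, y1; auto].
      + destruct Hb1 as [<-|[]]. left. exists R1, y1. split; [auto|tauto].
      + destruct Hb1 as [<-|[]]. left. exists ((x, zof x A R1 y1) :: (y1, zof x A R1 y1) :: R1), (zof x A R1 y1). split; [apply Inv_next; exact HI1|left; reflexivity]. }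
  destruct (classic (exists j R y, b j = idt R y A)) as [[j [R1 [y1 Ej]]]|Hno].
  { apply (trace_shift b j). apply (proj2 (idt_spec R1 y1 A)). rewrite <- Ej. eapply branch_shift. exact (conj Hb0 Hb1). }
  assert (Hsp : forall i, spine x A (b i)) by (intro i; destruct (Hall i); [auto|contradiction]).
  assert (Hstep : forall i R1 y1, Inv x R1 y1 ->
     (b i = L x A R1 y1 -> b (S i) = n1 x A R1 y1) /\
     (b i = n1 x A R1 y1 -> b (S i) = n2 x A R1 y1) /\
     (b i = n2 x A R1 y1 -> b (S i) = n3 x A R1 y1) /\
     (b i = n3 x A R1 y1 -> b (S i) = n4 x A R1 y1) /\
     (b i = n4 x A R1 y1 -> b (S i) = L x A ((x, zof x A R1 y1) :: (y1, zof x A R1 y1) :: R1) (zof x A R1 y1))).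
  { intros i R1 y1 HI1. pose proof (Hb1 i) as H.
    repeat split; intro E; rewrite E in H.
    - apply Lchild in H; auto.
    - destruct H as [<-|[]]; auto.
    - destruct H as [<-|[E2|[]]]; auto. exfalso; apply Hno; eauto.
    - destruct H as [<-|[]]; auto.
    - destruct H as [<-|[]]; auto. }
  assert (Hn4 : forall i R1 y1, Inv x R1 y1 -> b i = n4 x A R1 y1 ->
     In (tl x (root (b i)), tl x (root (b (S i)))) (rel (root (b i)))).
  { intros i R1 y1 HI1 E. destruct (Hstep i R1 y1 HI1) as [_ [_ [_ [_ S4]]]].
    destruct HI1 as [R0 [-> Hne]].
    rewrite (S4 E), E, L_unfold. unfold n4. simpl. rewrite tl_std by apply zof_ne.
    unfold tl at 1. simpl. rewrite Nat.eqb_refl. simpl. destruct (Nat.eqb_spec y1 x); [contradiction|].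
    left. reflexivity. }
  exists 0, (fun i => tl x (root (b i))). split.
  - intros i _. destruct (Hsp i) as [R1 [y1 [HI1 Ht]]].
    destruct (Hstep i R1 y1 HI1) as [S0 [S1 [S2 [S3 S4]]]].
    destruct HI1 as [R0 [-> Hne]].
    destruct Ht as [E|[E|[E|[E|E]]]]; [left|left|left|left|right].
    + rewrite (S0 E), E, L_unfold. simpl. rewrite !tl_std; auto.
    + rewrite (S1 E), E. simpl. rewrite !tl_std; auto.
    + rewrite (S2 E), E. simpl. rewrite !tl_std; auto.
    + rewrite (S3 E), E. simpl. rewrite tl_std; auto. unfold tl. simpl.
      rewrite Nat.eqb_refl. simpl. destruct (Nat.eqb_spec y1 x); [contradiction|reflexivity].
    + rewrite (S4 E), E, L_unfold. unfold n4. simpl. rewrite tl_std by apply zof_ne.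
      unfold tl at 1. simpl. rewrite Nat.eqb_refl. simpl. destruct (Nat.eqb_spec y1 x); [contradiction|].
      left. reflexivity.
  - intros n. destruct (Hsp n) as [R1 [y1 [HI1 Ht]]].
    destruct Ht as [E|[E|[E|[E|E]]]].
    + pose proof (proj1 (Hstep n R1 y1 HI1) E) as E1.
      pose proof (proj1 (proj2 (Hstep (S n) R1 y1 HI1)) E1) as E2.
      pose proof (proj1 (proj2 (proj2 (Hstep (S (S n)) R1 y1 HI1))) E2) as E3.
      pose proof (proj1 (proj2 (proj2 (proj2 (Hstep (S (S (S n))) R1 y1 HI1)))) E3) as E4.
      exists (S (S (S (S n)))). split; [lia|split; [lia|]]. eapply Hn4; eauto.
    + pose proof (proj1 (proj2 (Hstep n R1 y1 HI1)) E) as E2.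
      pose proof (proj1 (proj2 (proj2 (Hstep (S n) R1 y1 HI1))) E2) as E3.
      pose proof (proj1 (proj2 (proj2 (proj2 (Hstep (S (S n)) R1 y1 HI1)))) E3) as E4.
      exists (S (S (S n))). split; [lia|split; [lia|]]. eapply Hn4; eauto.
    + pose proof (proj1 (proj2 (proj2 (Hstep n R1 y1 HI1))) E) as E3.
      pose proof (proj1 (proj2 (proj2 (proj2 (Hstep (S n) R1 y1 HI1)))) E3) as E4.
      exists (S (S n)). split; [lia|split; [lia|]]. eapply Hn4; eauto.
    + pose proof (proj1 (proj2 (proj2 (proj2 (Hstep n R1 y1 HI1)))) E) as E4.
      exists (S n). split; [lia|split; [lia|]]. eapply Hn4; eauto.
    + exists n. split; [lia|split; [lia|]]. eapply Hn4; eauto.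
Qed.

Lemma L_inf x A R y : Inv x R y -> inf_proof (L x A R y).
Proof.
  intros HI. split.
  - apply (spine_preproof x A). exists R, y. split; auto.
  - intros b Hb. eapply loeb_branch; eauto.
Qed.

Lemma der_loeb x A : der (Seq [] [] [(x, Imp (Box (Imp (Box A) A)) (Box A))]).
Proof.
  eapply der_lk1; [apply (r_impR [] [] [])|].
  set (y := freshl (Seq [] [(x, Box (Imp (Box A) A))] [(x, Box A)])).
  assert (Hy : fresh y (Seq [] [(x, Box (Imp (Box A) A))] [(x, Box A)])) by apply freshl_fresh.
  eapply der_lk1; [apply (r_boxR [] [(x, Box (Imp (Box A) A))] [] x y A Hy)|].
  exists (L x A [(x, y)] y). split; [rewrite L_unfold; reflexivity|].
  apply L_inf. exists []. split; [reflexivity|].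
  intro E. apply Hy. rewrite E. unfold labels_of. simpl. auto.
Qed.

Lemma der_K x A B : der (Seq [] [] [(x, Imp (Box (Imp A B)) (Imp (Box A) (Box B)))]).
Proof.
  eapply der_lk1; [apply (r_impR [] [] [])|].
  eapply der_lk1; [apply (r_impR [] _ [])|].
  set (s := Seq [] [(x, Box A); (x, Box (Imp A B))] [(x, Box B)]).
  eapply der_lk1; [apply (r_boxR [] _ [] x (freshl s) B); apply freshl_fresh|].
  eapply der_lk1; [apply r_boxL; left; reflexivity|].
  eapply der_perm; [|apply perm_swap|apply Permutation_refl].
  eapply der_lk1; [apply r_boxL; left; reflexivity|].
  apply (prop_complete _ _ [Imp A B; A] [B]).
  intros v Hv. exists B. split; [left; auto|].
  pose proof (Hv (Imp A B) ltac:(simpl; auto)) as H1. pose proof (Hv A ltac:(simpl; auto)) as H2.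
  simpl in H1. rewrite H2 in H1. exact H1.
Qed.

Lemma der_4 x A : der (Seq [] [] [(x, Imp (Box A) (Box (Box A)))]).
Proof.
  eapply der_lk1; [apply (r_impR [] [] [])|].
  set (s := Seq [] [(x, Box A)] [(x, Box (Box A))]).
  set (y := freshl s).
  eapply der_lk1; [apply (r_boxR [] _ [] x y (Box A)); apply freshl_fresh|].
  set (s2 := Seq [(x, y)] [(x, Box A)] [(y, Box A)]).
  set (z := freshl s2).
  eapply der_lk1; [apply (r_boxR [(x, y)] _ [] y z A); apply freshl_fresh|].
  eapply der_lk1; [apply (r_tr _ _ _ x y z); [right; left; reflexivity|left; reflexivity]|].
  eapply der_lk1; [apply r_boxL; left; reflexivity|].
  apply identity.
Qed.

Lemma der_dual1 x A : der (Seq [] [] [(x, Imp (Dia A) (Neg (Box (Neg A))))]).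
Proof.
  eapply der_lk1; [apply (r_impR [] [] [])|].
  eapply der_lk1; [apply (r_impR [] _ [])|].
  eapply der_perm; [|apply perm_swap|apply Permutation_refl].
  set (s := Seq [] [(x, Dia A); (x, Box (Neg A))] [(x, Bot)]).
  eapply der_lk1; [apply (r_diaL [] _ _ x (freshl s) A); apply freshl_fresh|].
  eapply der_perm; [|apply perm_swap|apply Permutation_refl].
  eapply der_lk1; [apply r_boxL; left; reflexivity|].
  eapply der_lk1; [apply r_WR|].
  apply (prop_complete _ _ [Neg A; A] []).
  intros v Hv. exfalso.
  pose proof (Hv (Neg A) ltac:(simpl; auto)) as H1. pose proof (Hv A ltac:(simpl; auto)) as H2.
  simpl in H1. rewrite H2 in H1. discriminate.
Qed.

Lemma der_dual2 x A : der (Seq [] [] [(x, Imp (Neg (Box (Neg A))) (Dia A))]).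
Proof.
  eapply der_lk1; [apply (r_impR [] [] [])|].
  eapply der_lk2; [apply (r_impL [] [] [] [(x, Dia A)] [])| |].
  - set (s := Seq [] [] [(x, Box (Neg A)); (x, Dia A)]).
    eapply der_lk1; [apply (r_boxR [] [] _ x (freshl s) (Neg A)); apply freshl_fresh|].
    eapply der_lk1; [apply r_impR|].
    eapply der_perm; [|apply Permutation_refl|apply perm_swap].
    eapply der_lk1; [apply r_diaR; left; reflexivity|].
    pose proof (weakR _ _ _ [(freshl s, Bot)] (identity A [(x, freshl s)] (freshl s))) as H.
    eapply der_perm; [exact H|apply Permutation_refl|apply perm_swap].
  - apply der_lk0. apply r_botL.
Qed.

Lemma GL_der A : GL A -> forall x, der (Seq [] [] [(x, A)]).
Proof.
  induction 1; intro x.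
  - apply taut_der; auto.
  - apply der_K.
  - apply der_4.
  - apply der_loeb.
  - apply der_dual1.
  - apply der_dual2.
  - change (der (Seq [] ([] ++ []) ([] ++ [(x, B)]))).
    eapply der_lk2; [apply (r_cut [] [] [] [] [(x, B)] x (Imp A B))|apply IHGL1|].
    change (der (Seq [] ((x, Imp A B) :: [] ++ []) ([] ++ [(x, B)]))).
    eapply der_lk2; [apply (r_impL [] [] [] [] [(x, B)])|apply IHGL2|apply identity].
  - set (y := freshl (Seq [] [] [(x, Box A)])).
    eapply der_lk1; [apply (r_boxR [] [] [] x y A); apply freshl_fresh|].
    change (der (Seq ([] ++ [(x, y)]) [] [(y, A)])).
    eapply der_lk1; [apply r_thin|apply IHGL].
Qed.

Theorem mainTheorem13 : forall (A : form) (x : label),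
  GL A ->
  exists t : ptree, root t = Seq [] [] [(x, A)] /\ inf_proof t.
Proof. intros A x H. exact (GL_der A H x). Qed.
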